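(* Let $(\alpha_n,\beta_n)$ be a Bailey pair relative to $a$. Define $\alpha^*_0=\beta^*_0=1$ and, for $n\ge1$, \[ \alpha^*_n = (aq^{n}+q^{-n})\alpha_n,\qquad \beta^*_n =\frac{(1+aq^{2n})\beta_n-\beta_{n-1}}{q^{n}}-\frac{a}{(aq,q;q)_{n}}. \] Then $(\alpha^*_n,\beta^*_n)$ is a Bailey pair relative to $a$.
   Context: Notation: $(x;q)_n=\prod_{i=0}^{n-1}(1-xq^i)$, $(x_1,\dots,x_j;q)_n=(x_1;q)_n\cdots(x_j;q)_n$. A pair of sequences $(\alpha_n,\beta_n)_{n\ge0}$ is a Bailey pair relative to $a$ if $\alpha_0=1$ and for all $n\ge0$, $\beta_n=\sum_{r=0}^n\frac{\alpha_r}{(q;q)_{n-r}(aq;q)_{n+r}}$. Parameters are assumed generic so that no denominator vanishes. *)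

(* Defs.v *)
From mathcomp Require Import all_boot all_order all_algebra.
Set Implicit Arguments. Unset Strict Implicit. Unset Printing Implicit Defensive.
Import GRing.Theory.
Local Open Scope ring_scope.

Definition qpoch {F : fieldType} (x q : F) (n : nat) : F :=
  \prod_(i < n) (1 - x * q ^+ i).

Definition bailey_pair {F : fieldType} (a q : F) (alpha beta : nat -> F) : Prop :=
  alpha 0%N = 1 /\
  forall n : nat,
    beta n = \sum_(r < n.+1)
               alpha r / (qpoch q q (n - r) * qpoch (a * q) q (n + r)).

Definition alpha_star {F : fieldType} (a q : F) (alpha : nat -> F) (n : nat) : F :=
  match n with 0%N => 1 | _ => (a * q ^+ n + q ^- n) * alpha n end.

Definition beta_star {F : fieldType} (a q : F) (beta : nat -> F) (n : nat) : F :=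
  match n with 0%N => 1 | _ =>
    ((1 + a * q ^+ (2 * n)) * beta n - beta n.-1) / q ^+ n
    - a / (qpoch (a * q) q n * qpoch q q n) end.

(* Main.v *)
Require Import Defs.
From mathcomp Require Import all_boot all_order all_algebra.
From mathcomp Require Import ring.
Import GRing.Theory.
Local Open Scope ring_scope.

Lemma qpochS (F : fieldType) (x q : F) n : qpoch x q n.+1 = qpoch x q n * (1 - x * q ^+ n).
Proof. by rewrite /qpoch big_ord_recr. Qed.

Lemma qpoch_neq0 (F : fieldType) (x q : F) n :
  (forall i : nat, x * q ^+ i != 1) -> qpoch x q n != 0.
Proof.
move=> h; elim: n => [|n IH]; first by rewrite /qpoch big_ord0 oner_neq0.
by rewrite qpochS mulf_neq0 // subr_eq0 eq_sym.
Qed.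

Theorem mainTheorem2 (F : fieldType) (a q : F) (alpha beta : nat -> F)
  (hq : q != 0)
  (hqq : forall i : nat, q ^+ i.+1 != 1)
  (haq : forall i : nat, a * q ^+ i.+1 != 1) :
  bailey_pair a q alpha beta ->
  bailey_pair a q (alpha_star a q alpha) (beta_star a q beta).
Proof.
have hP : forall n, qpoch q q n != 0.
  by move=> n; apply: qpoch_neq0 => i; rewrite -exprS.
have hA : forall n, qpoch (a * q) q n != 0.
  by move=> n; apply: qpoch_neq0 => i; rewrite -mulrA -exprS.
have hqr : forall r, q ^+ r != 0 by move=> r; rewrite expf_neq0.
move=> [h0 hb]; split; first by [].
have ast : forall r, alpha_star a q alpha r
    = (a * q ^+ r + q ^- r) * alpha r - (r == 0)%:R * a.
  case=> [|r] /=; first by rewrite h0 expr0 invr1 mulr1n; ring.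
  by rewrite mulr0n mul0r subr0.
case=> [|m].
  rewrite /= big_ord1 /= /qpoch !big_ord0. by rewrite mulr1 divr1.
rewrite /beta_star /= (hb m.+1) (hb m).
under eq_bigr => r _ do rewrite ast mulrBl.
rewrite sumrB [X in _ = _ - X]big_ord_recl [X in _ = _ - (_ + X)]big1 /=; last first.
  by move=> i _; rewrite mul0r mul0r.
rewrite mul1r addr0 subn0 addn0 [qpoch q q _ * _]mulrC.

congr (_ - _).
apply: (@mulIf _ (q ^+ m.+1)); first exact: hqr.
rewrite divfK //.
rewrite big_ord_recr /= [X in _ = X * _]big_ord_recr /= subnn addnn.
set D := qpoch q q 0 * _.
have hD : D != 0 by rewrite mulf_neq0.
clearbody D.
have Hlast : (1 + a * q ^+ (2 * m.+1)) * (alpha m.+1 / D)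
   = (a * q ^+ m.+1 + q ^- m.+1) * alpha m.+1 / D * q ^+ m.+1.
  rewrite mulnC exprM; have := hqr m.+1; move: (q ^+ m.+1) => x hx.
  by field; rewrite hD hx.
rewrite mulrDr Hlast [RHS]mulrDl addrAC; congr (_ + _).
rewrite mulr_sumr mulr_suml -sumrB; apply: eq_bigr => [[r hr]] _ /=.
have hrm : (r <= m)%N by [].

rewrite (subSn hrm) addSn !qpochS.
have e1 : q ^+ m.+1 = q * q ^+ (m - r) * q ^+ r.
  by rewrite -mulrA -exprD subnK // exprS.
have e2 : q ^+ (2 * m.+1) = (q * q ^+ (m - r) * q ^+ r) ^+ 2.
  by rewrite -e1 mulnC exprM.
have e3 : q ^+ (m + r) = q ^+ (m - r) * q ^+ r * q ^+ r.
  by rewrite -!exprD subnK.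
have n1 := hP (m - r)%N; have n2 := hA (m + r)%N.
have n3 : 1 - q * q ^+ (m - r) != 0 by rewrite subr_eq0 eq_sym -exprS.
have n4 : 1 - a * q * q ^+ (m + r) != 0 by rewrite subr_eq0 eq_sym -mulrA -exprS.
have n5 := hqr r; have n6 := hqr (m - r)%N.
rewrite e3 in n4 *; rewrite e1 e2.
move: n1 n2 n3 n4 n5 n6.
set x := q ^+ r; set y := q ^+ (m - r); set P := qpoch q q _; set A := qpoch _ _ _.
move=> n1 n2 n3 n4 n5 n6.

by field; rewrite n1 n2 n3 n4 n5.
Qed.
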